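(* Let $\Gamma$ be a set of clauses. If $\Gamma$ has a regWRTL refutation $R$, then $\Gamma$ has a pool resolution refutation $R'$ whose size is no greater than the size of $R$.
   Context: A literal is a propositional variable $x$ or its negation $\overline{x}$; a clause is a set of literals, interpreted as their disjunction. Three inference rules deriving a clause $C$ from clauses $A$ and $B$ with respect to a literal $x$ (the resolution variable), where $\overline{x}\notin A$ and $x\notin B$: - Resolution: requires $x\in A$, $\overline{x}\in B$, and $C=(A\setminus\{x\})\cup(B\setminus\{\overline{x}\})$. - Degenerate resolution: if $x\in A$ and $\overline x\in B$, $C$ is as in resolution; if $x\in A$ and $\overline x\notin B$, $C=B$; if $x\notin A$ and $\overline x\in B$, $C=A$; otherwise $C$ is one of $A$ or $B$. - w-resolution: $C=(A\setminus\{x\})\cup(B\setminus\{\overline{x}\})$ (no requirement that $x\in A$ or $\overline x\in B$). For a tree $T$, the postorder $<_T$ is defined by: if $v$ is in the subtree of the left child of $u$ and $w$ in the subtree of the right child of $u$, then $v<_T w<_T u$. A regRTL derivation of a clause $C$ from $\Gamma$ is a tree-like derivation $T$ such that (a) each leaf is labeled with either a clause of $\Gamma$ or a clause (a ''lemma'') that labels some node earlier in $T$ in the postorder $<_T$; (b) each internal node is labeled with a clause and a variable, and its clause is obtained by resolution on that variable from the clauses labeling its two children; (c) $T$ is regular: no variable is used as resolution variable more than once along any root-to-leaf path, and no variable occurring in $C$ is used as a resolution variable; (d) the root is labeled $C$. It is a refutation if $C$ is the empty clause. A regWRTL derivation is defined the same way but allowing w-resolution inferences in (b); a pool resolution derivation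 is defined the same way but allowing degenerate resolution inferences in (b). The size of a derivation is the number of clauses (nodes) in it. *)

(* Defs.v *)
From mathcomp Require Import all_boot.
Set Implicit Arguments. Unset Strict Implicit. Unset Printing Implicit Defensive.

Section Clauses.
Variable V : eqType.

(* A literal is a variable with a polarity: (v, true) = v, (v, false) = ~v. *)
Definition lit := (V * bool)%type.
Definition lvar (l : lit) : V := l.1.
Definition lneg (l : lit) : lit := (l.1, ~~ l.2).

(* A clause is a finite set of literals, represented by a seq; two clauses are
   the same set iff they are equal as predicates ( =i ). *)
Definition clause := seq lit.

Definition resolvent (A B : clause) (x : lit) : clause :=
  [seq y <- A | y != x] ++ [seq y <- B | y != lneg x].

Definition side_cond (A B : clause) (x : lit) : Prop :=
  lneg x \notin A /\ x \notin B.

Definition res_rule (A B C : clause) (x : lit) : Prop :=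
  side_cond A B x /\ x \in A /\ lneg x \in B /\ C =i resolvent A B x.

Definition deg_rule (A B C : clause) (x : lit) : Prop :=
  side_cond A B x /\
  (if x \in A then
     (if lneg x \in B then C =i resolvent A B x else C =i B)
   else
     (if lneg x \in B then C =i A else (C =i A \/ C =i B))).

Definition w_rule (A B C : clause) (x : lit) : Prop :=
  side_cond A B x /\ C =i resolvent A B x.

(* Tree-like derivations: a leaf is labeled with a clause; an internal node is
   labeled with a clause and the resolution literal x, its left child being the
   premise A (the one that may contain x) and its right child the premise B. *)
Inductive tree : Type :=
| Leaf of clause
| Node of clause & lit & tree & tree.

Definition label (t : tree) : clause :=
  match t with Leaf C => C | Node C _ _ _ => C end.

Fixpoint tree_size (t : tree) : nat :=
  match t with Leaf _ => 1 | Node _ _ l r => (tree_size l + tree_size r).+1 end.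

Fixpoint postorder (t : tree) : seq clause :=
  match t with
  | Leaf C => [:: C]
  | Node C _ l r => postorder l ++ postorder r ++ [:: C]
  end.

(* (a): every leaf is labeled with a clause of Gamma or with a clause labeling a
   node that is earlier in the postorder; [prev] = labels of all nodes preceding
   the current subtree in the postorder. *)
Fixpoint leaves_ok (Gamma : clause -> Prop) (prev : seq clause) (t : tree) : Prop :=
  match t with
  | Leaf C => (exists D, Gamma D /\ D =i C) \/ (exists2 D, D \in prev & D =i C)
  | Node _ _ l r =>
      leaves_ok Gamma prev l /\ leaves_ok Gamma (prev ++ postorder l) r
  end.

Fixpoint rules_ok (rule : clause -> clause -> clause -> lit -> Prop) (t : tree) : Prop :=
  match t with
  | Leaf _ => True
  | Node C x l r => rule (label l) (label r) C x /\ rules_ok rule l /\ rules_ok rule r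
  end.

(* (c): regularity; [used] = variables forbidden as resolution variables
   (those used above on the path, plus those occurring in the derived clause). *)
Fixpoint regular_from (used : seq V) (t : tree) : Prop :=
  match t with
  | Leaf _ => True
  | Node _ x l r =>
      lvar x \notin used /\
      regular_from (lvar x :: used) l /\ regular_from (lvar x :: used) r
  end.

Definition regular (t : tree) (C : clause) : Prop :=
  regular_from (map lvar C) t.

Definition derivation (rule : clause -> clause -> clause -> lit -> Prop)
  (Gamma : clause -> Prop) (t : tree) (C : clause) : Prop :=
  [/\ leaves_ok Gamma [::] t, rules_ok rule t, regular t C & label t =i C].

Definition refutation rule Gamma t := derivation rule Gamma t [::].

Definition regRTL_refutation := refutation res_rule.
Definition regWRTL_refutation := refutation w_rule.
Definition pool_refutation := refutation deg_rule.

End Clauses.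

(* Main.v *)
Require Import Defs.
From mathcomp Require Import all_boot.

Section Proof.
Variable V : eqType.
Variable Gamma : clause V -> Prop.

Definition cover (P' P : seq (clause V)) : Prop :=
  forall D, D \in P -> exists2 D', D' \in P' & {subset D' <= D}.

Lemma cover_cat P1' P1 P2' P2 : cover P1' P1 -> cover P2' P2 ->
  cover (P1' ++ P2') (P1 ++ P2).
Proof.
move=> h1 h2 D; rewrite mem_cat => /orP [/h1|/h2] [D' hD' hs];
  exists D' => //; by rewrite mem_cat hD' ?orbT.
Qed.

Lemma cover1 (C' C : clause V) : {subset C' <= C} -> cover [:: C'] [:: C].
Proof. move=> hs D; rewrite inE => /eqP ->; exists C' => //; exact: mem_head. Qed.

Lemma main (t : tree V) : forall P P' used, cover P' P ->
  leaves_ok Gamma P t -> rules_ok (@w_rule V) t -> regular_from used t ->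
  exists t', [/\ leaves_ok Gamma P' t', rules_ok (@deg_rule V) t',
     regular_from used t', {subset label t' <= label t} &
     tree_size t' = tree_size t /\ cover (postorder t') (postorder t)].
Proof.
elim: t => [C|C x l IHl r IHr] P P' used hcov /=.
- move=> hl _ _.
  case: hl => [hG|[D hD hDC]].
  + exists (Leaf C); split => //=; [by left|split => //; exact: cover1].
  + have [D' hD' hs] := hcov D hD.
    have hs' : {subset D' <= C} by move=> y /hs; rewrite hDC.
    exists (Leaf D'); split => //=; [right; by exists D'|split => //; exact: cover1].
- move=> [hll hlr] [[[hsa hsb] hC] [hrl hrr]] [hx [hgl hgr]].
  have [l' [l1 l2 l3 l4 [l5 l6]]] := IHl P P' (lvar x :: used) hcov hll hrl hgl.
  have hcov2 : cover (P' ++ postorder l') (P ++ postorder l) by exact: cover_cat.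
  have [r' [r1 r2 r3 r4 [r5 r6]]] := IHr _ _ (lvar x :: used) hcov2 hlr hrr hgr.
  set A' := label l' in l4 *; set B' := label r' in r4 *.
  pose C' := if x \in A' then (if lneg x \in B' then resolvent A' B' x else B') else A'.
  have hsc : side_cond A' B' x.
    split; apply/negP => h; [move/negP: hsa; apply; exact: l4|move/negP: hsb; apply; exact: r4].
  have hdeg : deg_rule A' B' C' x.
    split => //; rewrite /C'; case hxa: (x \in A'); case hyb: (lneg x \in B') => //=;
      try (move=> ?; done); by left.
  have hsub : {subset C' <= C}.
    move=> y; rewrite hC /resolvent mem_cat !mem_filter /C'.
    case hxa: (x \in A'); case hyb: (lneg x \in B').
    + rewrite /resolvent mem_cat !mem_filter => /orP [/andP [-> /l4 ->]|/andP [-> /r4 ->]] //.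
      by rewrite orbT.
    + move=> hy; rewrite (r4 _ hy) andbT.
      have -> : y != lneg x by apply/eqP => e; rewrite -e hy in hyb.
      by rewrite orbT.
    + move=> hy; rewrite (l4 _ hy) andbT.
      by have -> : y != x by apply/eqP => e; rewrite -e hy in hxa.
    + move=> hy; rewrite (l4 _ hy) andbT.
      by have -> : y != x by apply/eqP => e; rewrite -e hy in hxa.
  exists (Node C' x l' r'); split => //=; split.
  + by rewrite l5 r5.
  + apply: cover_cat => //; apply: cover_cat => //; exact: cover1.
Qed.

End Proof.

Theorem proposition1p9 (V : eqType) (Gamma : clause V -> Prop) (R : tree V) :
  regWRTL_refutation Gamma R ->
  exists R' : tree V, pool_refutation Gamma R' /\ tree_size R' <= tree_size R.
Proof.
move=> [h1 h2 h3 h4].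
have hc : @cover V [::] [::] by [].
have [R' [r1 r2 r3 r4 [r5 _]]] := @main V Gamma R _ _ _ hc h1 h2 h3.
exists R'; split; last by rewrite r5.
split => //.
move=> y; rewrite in_nil; apply/negP => /r4; by rewrite h4.
Qed.
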